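(* Let $R$ be a commutative Noetherian ring of prime characteristic $p$ and let $H$ be a left $R[x,f]$-module admitting an HSL-number $m_0$, such that the $x$-torsion-free module $G:=H/\Gamma_x(H)$ has only finitely many $G$-special $R$-ideals. Let $\mathfrak{b}$ be the unique member of $\mathcal{I}(G)$ of height $\ge1$ that is contained in every member of $\mathcal{I}(G)$ of height $\ge1$. For $h\in H$ the following are equivalent: (i) $h$ is annihilated by $\bigoplus_{n\ge m_0}\mathfrak{b}^{[p^{m_0}]}x^n$; (ii) there exists $c\in R^\circ\cap\mathfrak{b}$ with $cx^nh=0$ for all $n\ge m_0$; (iii) there exists $c\in R^\circ\cap\mathfrak{b}$ with $cx^nh=0$ for all $n\gg0$; (iv) there exists $c\in R^\circ$ with $cx^nh=0$ for all $n\gg0$.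
   Context: $R[x,f]$ is the Frobenius skew polynomial ring: free left $R$-module on $(x^i)_{i\ge0}$, with $xr=r^px$. $\Gamma_x(H)=\{h\in H: x^jh=0\text{ for some }j\in\mathbb{N}\}$, an $R[x,f]$-submodule; $H/\Gamma_x(H)$ is $x$-torsion-free ($xg=0\Rightarrow g=0$). $H$ admits an HSL-number if there is $e\in\mathbb{N}_0$ with $x^e\Gamma_x(H)=0$; the smallest such $e$ is the HSL-number. The graded annihilator $\operatorname{grann}N$ is the set of $\sum r_ix^i$ with each $r_ix^i$ annihilating $N$. An ideal $\mathfrak{b}$ of $R$ is $G$-special if $\operatorname{grann}N=\bigoplus_{n\ge0}\mathfrak{b}x^n$ for some $R[x,f]$-submodule $N$ of $G$; $\mathcal{I}(G)$ is the set of these; $R$ has infinite height. $\mathfrak{b}^{[q]}$ is the ideal generated by $q$-th powers of elements of $\mathfrak{b}$; $R^\circ$ is the complement of the union of minimal primes. *)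

(* Defs.v *)
From mathcomp Require Import all_boot ssralg.
Set Implicit Arguments. Unset Strict Implicit. Unset Printing Implicit Defensive.
Import GRing.Theory.
Local Open Scope ring_scope.

Section Ideals.
Variable R : comNzRingType.

Definition is_ideal (I : R -> Prop) : Prop :=
  [/\ I 0, (forall a b, I a -> I b -> I (a + b)) & (forall r a, I a -> I (r * a))].

Definition is_prime (P : R -> Prop) : Prop :=
  [/\ is_ideal P, ~ P 1 & (forall a b, P (a * b) -> P a \/ P b)].

Definition noetherian : Prop :=
  forall I : nat -> (R -> Prop), (forall n, is_ideal (I n)) ->
    (forall n r, I n r -> I n.+1 r) ->
    exists N, forall n r, (N <= n)%N -> I n r -> I N r.

Definition sincl (P Q : R -> Prop) : Prop :=
  (forall r, P r -> Q r) /\ exists r, Q r /\ ~ P r.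

(* ht(I) >= n : every prime P containing I has height >= n, i.e. admits a
   chain of primes P_0 ⊊ P_1 ⊊ ... ⊊ P_n = P.  (The unit ideal, contained in
   no prime, has infinite height, as in the paper's convention.) *)
Definition height_ge (I : R -> Prop) (n : nat) : Prop :=
  forall P, is_prime P -> (forall r, I r -> P r) ->
    exists c : nat -> (R -> Prop),
      [/\ (forall i, (i <= n)%N -> is_prime (c i)),
          (forall i, (i < n)%N -> sincl (c i) (c i.+1)) &
          (forall r, c n r <-> P r)].

Definition minimal_prime (P : R -> Prop) : Prop :=
  is_prime P /\ forall Q, is_prime Q -> ~ sincl Q P.

Definition Rcirc (c : R) : Prop := forall P, minimal_prime P -> ~ P c.

Definition frob_bracket (b : R -> Prop) (q : nat) (r : R) : Prop :=
  exists k (a s : 'I_k -> R), (forall i, b (s i)) /\ r = \sum_(i < k) a i * s i ^+ q.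

End Ideals.

(* Left R[x,f]-modules: an R-module M together with an additive map
   x : M -> M with x (r m) = r^p x m (the action of x in R[x,f]).
   The element r x^n acts as m |-> r *: iter n x m. *)
Section FrobModules.
Variables (R : comNzRingType) (p : nat).

Definition frob_action (M : lmodType R) (x : M -> M) : Prop :=
  (forall a b, x (a + b) = x a + x b) /\ (forall (r : R) a, x (r *: a) = r ^+ p *: x a).

Definition Gamma_x (M : lmodType R) (x : M -> M) (m : M) : Prop :=
  exists j, iter j x m = 0.

Definition HSL_number (M : lmodType R) (x : M -> M) (m0 : nat) : Prop :=
  (forall m, Gamma_x x m -> iter m0 x m = 0) /\
  (forall e, (forall m, Gamma_x x m -> iter e x m = 0) -> (m0 <= e)%N).

Definition Rxf_submodule (M : lmodType R) (x : M -> M) (N : M -> Prop) : Prop :=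
  [/\ N 0, (forall a b, N a -> N b -> N (a + b)),
      (forall (r : R) a, N a -> N (r *: a)) & (forall a, N a -> N (x a))].

(* The degree-n component of the graded annihilator of N:
   those r with r x^n annihilating N. *)
Definition grann_comp (M : lmodType R) (x : M -> M) (N : M -> Prop) (n : nat) (r : R) : Prop :=
  forall g, N g -> r *: iter n x g = 0.

(* b is M-special: grann N = (+)_{n>=0} b x^n for some R[x,f]-submodule N. *)
Definition special_ideal (M : lmodType R) (x : M -> M) (b : R -> Prop) : Prop :=
  is_ideal b /\ exists N, Rxf_submodule x N /\
    forall n r, grann_comp x N n r <-> b r.

(* I(M) has only finitely many members (up to extensional equality). *)
Definition finitely_many_special (M : lmodType R) (x : M -> M) : Prop :=
  exists (k : nat) (s : nat -> (R -> Prop)),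
    forall b, special_ideal x b -> exists2 i, (i < k)%N & forall r, b r <-> s i r.

End FrobModules.

(* Main.v *)
Require Import Defs.
From mathcomp Require Import all_boot ssralg.
From Stdlib Require Import Classical ClassicalEpsilon.
From mathcomp Require Import zify.
Import GRing.Theory.
Local Open Scope ring_scope.

Section RingPart.
Variable R : comNzRingType.

Definition goodI (I : R -> Prop) := exists m (Q : nat -> R -> Prop),
  (forall i, (i < m)%N -> is_prime (Q i)) /\
  forall P, is_prime P -> (forall r, I r -> P r) ->
    exists2 i, (i < m)%N & forall r, Q i r -> P r.

Definition addgen (I : R -> Prop) (a : R) (r : R) : Prop :=
  exists i s, I i /\ r = i + s * a.

Lemma addgen_ideal I a : is_ideal I -> is_ideal (addgen I a).
Proof.
case=> I0 ID IM; split.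
- by exists 0, 0; rewrite mul0r addr0.
- move=> x y [i1 [s1 [H1 ->]]] [i2 [s2 [H2 ->]]].
  exists (i1 + i2), (s1 + s2); split; first exact: ID.
  by rewrite mulrDl addrACA.
- move=> r x [i [s [Hi ->]]]; exists (r * i), (r * s); split; first exact: IM.
  by rewrite mulrDr mulrA.
Qed.

Lemma addgen_sub I a : is_ideal I -> forall r, I r -> addgen I a r.
Proof. by move=> _ r Hr; exists r, 0; rewrite mul0r addr0. Qed.

Lemma addgen_in I a : is_ideal I -> addgen I a a.
Proof. by case=> I0 _ _; exists 0, 1; rewrite mul1r add0r. Qed.

Lemma addgen_le I a P : is_ideal P -> (forall r, I r -> P r) -> P a ->
  forall r, addgen I a r -> P r.
Proof.
case=> P0 PD PM HI Pa r [i [s [Hi ->]]]; apply: PD; first exact: HI.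
exact: PM.
Qed.

Lemma bad_step I : is_ideal I -> ~ goodI I ->
  exists J, [/\ is_ideal J, ~ goodI J & sincl I J].
Proof.
move=> Iid Ibad.
have I1 : ~ I 1.
  move=> I1; apply: Ibad; exists 0%N, (fun _ => I); split=> // P [_ nP1 _] HP.
  by case: nP1; apply: HP.
have : ~ (forall a b, I (a * b) -> I a \/ I b).
  move=> Hp; apply: Ibad; exists 1%N, (fun _ => I); split=> // P _ HP.
  by exists 0%N.
move=> H0; case: (not_all_ex_not _ _ H0) => a {}H0.
case: (not_all_ex_not _ _ H0) => b {}H0.
case: (imply_to_and _ _ H0) => Hab {}H0.
case: (not_or_and _ _ H0) => Ha Hb.
have sa : sincl I (addgen I a).
  split; first exact: addgen_sub. by exists a; split=> //; apply: addgen_in.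
have sb : sincl I (addgen I b).
  split; first exact: addgen_sub. by exists b; split=> //; apply: addgen_in.
case: (classic (goodI (addgen I a))) => Ga; last first.
  by exists (addgen I a); split=> //; apply: addgen_ideal.
case: (classic (goodI (addgen I b))) => Gb; last first.
  by exists (addgen I b); split=> //; apply: addgen_ideal.
exfalso; apply: Ibad.
case: Ga => [m1 [Q1 [Q1p HQ1]]]; case: Gb => [m2 [Q2 [Q2p HQ2]]].
exists (m1 + m2)%N, (fun i => if (i < m1)%N then Q1 i else Q2 (i - m1)%N).
split.
  move=> i Hi; case: ifP => Hi1; first exact: Q1p.
  apply: Q2p; move: Hi Hi1; clear; lia.
move=> P Pp HP.
have Pi := Pp; case: Pi => Pid _ Pm.
case: (Pm a b (HP _ Hab)) => Pab.
  case: (HQ1 P Pp (addgen_le I a P Pid HP Pab)) => i Hi HQ.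
  by exists i; [move: Hi; clear; lia | rewrite Hi].
case: (HQ2 P Pp (addgen_le I b P Pid HP Pab)) => i Hi HQ.
exists (m1 + i)%N; first by move: Hi; clear; lia.
have -> : (m1 + i < m1)%N = false by clear; lia.
by rewrite addKn.
Qed.

Lemma noeth_good : noetherian R -> goodI (fun r => r = 0).
Proof.
move=> noeth; apply: NNPP => bad0.
pose inh : inhabited (R -> Prop) := inhabits (fun _ => False).
pose f := fun J => epsilon inh (fun K => (is_ideal J /\ ~ goodI J) ->
   [/\ is_ideal K, ~ goodI K & sincl J K]).
have fP : forall J, is_ideal J -> ~ goodI J ->
    [/\ is_ideal (f J), ~ goodI (f J) & sincl J (f J)].
  move=> J Jid Jbad.
  have ex : exists K, (is_ideal J /\ ~ goodI J) -> [/\ is_ideal K, ~ goodI K & sincl J K].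
    by case: (bad_step J Jid Jbad) => K HK; exists K.
  exact: (epsilon_spec inh _ ex (conj Jid Jbad)).
pose s n := iter n f (fun r => r = 0).
have sP : forall n, is_ideal (s n) /\ ~ goodI (s n).
  elim=> [|n [IH1 IH2]].
    split=> //; split=> //; first by move=> a b -> ->; rewrite addr0.
    by move=> r a ->; rewrite mulr0.
  by case: (fP _ IH1 IH2) => [? ? _]; split.
have sinc : forall n, sincl (s n) (s n.+1).
  by move=> n; case: (sP n) => H1 H2; case: (fP _ H1 H2).
case: (noeth s (fun n => proj1 (sP n)) (fun n => proj1 (sinc n))) => N HN.
case: (sinc N) => _ [r [Hr nHr]]; apply: nHr; exact: (HN N.+1 r (leqnSn N) Hr).
Qed.

Lemma prod_avoid P : is_prime P -> forall m (Q : nat -> R -> Prop),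
  (forall i, (i < m)%N -> minimal_prime (Q i) -> ~ (forall r, Q i r -> P r)) ->
  exists t, ~ P t /\ forall i, (i < m)%N -> minimal_prime (Q i) -> Q i t.
Proof.
move=> Pp; case: (Pp) => _ nP1 Pm; elim=> [|m IH] Q HQ.
  by exists 1; split.
case: (IH Q (fun i Hi => HQ i (leqW Hi))) => t [Pt Qt].
case: (classic (minimal_prime (Q m))) => Qm; last first.
  exists t; split=> // i; rewrite ltnS leq_eqVlt; case/orP=> [/eqP -> //|].
  exact: Qt.
have := HQ m (ltnSn m) Qm.
move=> H0; case: (not_all_ex_not _ _ H0) => u {}H0.
case: (imply_to_and _ _ H0) => Qu Pu.
exists (t * u); split.
  by case/Pm.
move=> i; rewrite ltnS leq_eqVlt; case/orP=> [/eqP -> Qi|Hi Qi].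
  by case: Qi => [[[_ _ IM] _ _] _]; apply: IM.
case: (Qi) => [[[_ _ IM] _ _] _]; rewrite mulrC; apply: IM; exact: Qt.
Qed.

Lemma ideal_opp (I : R -> Prop) : is_ideal I -> forall x y, I (x + y) -> I y -> I x.
Proof.
case=> _ ID IM x y Hxy Hy.
have -> : x = (x + y) + (-1) * y by rewrite mulN1r addrK.
by apply: ID => //; apply: IM.
Qed.

Lemma min_ideal (Q : R -> Prop) : minimal_prime Q -> is_ideal Q.
Proof. by case=> [[]]. Qed.

Lemma avoid (b : R -> Prop) : is_ideal b -> forall m (Q : nat -> R -> Prop),
  (forall i, (i < m)%N -> minimal_prime (Q i) -> ~ (forall r, b r -> Q i r)) ->
  exists y, b y /\ forall i, (i < m)%N -> minimal_prime (Q i) -> ~ Q i y.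
Proof.
move=> bid; case: (bid) => b0 bD bM; elim=> [|m IH] Q HQ.
  by exists 0; split.
case: (IH Q (fun i Hi => HQ i (leqW Hi))) => a [ba Qa].
have ext : forall y, (forall i, (i < m)%N -> minimal_prime (Q i) -> ~ Q i y) ->
    (minimal_prime (Q m) -> ~ Q m y) ->
    forall i, (i < m.+1)%N -> minimal_prime (Q i) -> ~ Q i y.
  move=> y H1 H2 i; rewrite ltnS leq_eqVlt; case/orP=> [/eqP -> //|]; exact: H1.
case: (classic (minimal_prime (Q m) -> ~ Q m a)) => Hm.
  by exists a; split=> //; apply: ext.
have [Qmm Qma] : minimal_prime (Q m) /\ Q m a.
  split; apply: NNPP => C; apply: Hm => // D; by case: C.
case: (classic (exists j, [/\ (j < m)%N, minimal_prime (Q j) &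
          forall r, Q j r -> Q m r])) => [[j [Hj Qj sub]]|nosub].
  exfalso; apply: (Qa j Hj Qj).
  case: Qmm => Qmp Qmmin; have := Qmmin (Q j) (proj1 Qj).
  move=> nsin; apply: NNPP => nQja; apply: nsin; split=> //.
  by exists a.
have Qmp := proj1 Qmm.
case: (prod_avoid (Q m) Qmp m Q) => [i Hi Qi sub|t [Qmt Qt]].
  by apply: nosub; exists i.
have := HQ m (ltnSn m) Qmm.
move=> H0; case: (not_all_ex_not _ _ H0) => s {}H0.
case: (imply_to_and _ _ H0) => bs Qms.
exists (a + s * t); split.
  by apply: bD => //; rewrite mulrC; apply: bM.
apply: ext.
  move=> i Hi Qi Qy; apply: (Qa i Hi Qi).
  apply: (ideal_opp (Q i) (min_ideal _ Qi) _ _ Qy).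
  by case: (Qi) => [[[_ _ IM] _ _] _]; apply: IM; apply: Qt.
move=> _ Qy; case: Qmp => Qid _ Qpm.
have : Q m (s * t).
  by rewrite addrC in Qy; apply: (ideal_opp _ Qid _ _ Qy).
by case/Qpm.
Qed.

Lemma height_not_min (b : R -> Prop) Q : height_ge b 1 -> minimal_prime Q ->
  ~ (forall r, b r -> Q r).
Proof.
move=> hb [Qp Qmin] sub.
case: (hb Q Qp sub) => c [cp cs cn].
apply: (Qmin (c 0%N) (cp 0%N isT)).
case: (cs 0%N isT) => H1 [r [H2 H3]]; split.
  by move=> x /H1 /cn.
by exists r; split=> //; apply/cn.
Qed.

Lemma Rcirc_exists (b : R -> Prop) : noetherian R -> is_ideal b ->
  height_ge b 1 -> exists c, Rcirc c /\ b c.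
Proof.
move=> noeth bid hb.
case: (noeth_good noeth) => m [Q [Qp HQ]].
case: (avoid b bid m Q) => [i _ Qi|y [hy Qy]].
  exact: height_not_min.
exists y; split=> // P [Pp Pmin] Py.
have [i Hi QiP] : exists2 i, (i < m)%N & forall r, Q i r -> P r.
  apply: HQ => // r ->; by case: Pp => [[]].
have PQ : forall r, P r -> Q i r.
  move=> r Pr; apply: NNPP => nQ; apply: (Pmin (Q i) (Qp i Hi)); split=> //.
  by exists r.
apply: (Qy i Hi) ; last exact: PQ.
split; first exact: Qp.
move=> Q' Q'p [s1 [r [r1 r2]]]; apply: (Pmin Q' Q'p); split.
  by move=> x /s1 /QiP.
by exists r; split=> //; apply: QiP.
Qed.

End RingPart.

Section ModPart.
Variables (R : comNzRingType) (p : nat) (M : lmodType R) (x : M -> M).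
Hypothesis xa : frob_action p x.

Lemma x0 : x 0 = 0.
Proof.
case: xa => xD _; have E := xD 0 0; rewrite addr0 in E.
by apply: (addrI (x 0)); rewrite addr0 -E.
Qed.

Lemma iter0 n : iter n x 0 = 0.
Proof. by elim: n => //= n ->; exact: x0. Qed.

Lemma iterDx n a c : iter n x (a + c) = iter n x a + iter n x c.
Proof. case: xa => xD _; by elim: n => //= n ->; rewrite xD. Qed.

Lemma iterZx n (r : R) a : iter n x (r *: a) = r ^+ (p ^ n) *: iter n x a.
Proof.
case: xa => _ xZ; elim: n => [|n IH] /=; first by rewrite expn0 expr1.
by rewrite IH xZ -exprM expnSr.
Qed.

Lemma powS (r : R) k (v : M) : (0 < k)%N -> r *: v = 0 -> r ^+ k *: v = 0.
Proof. by move=> hk Hv; rewrite -(prednK hk) exprSr -scalerA Hv scaler0. Qed.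

End ModPart.
Arguments iterZx {R p M x} xa n r a.
Arguments iterDx {R p M x} xa n a c.
Arguments iter0 {R p M x} xa n.
Arguments powS {R M} r k v.

Lemma prime_exp (R : comNzRingType) (P : R -> Prop) (c : R) k :
  is_prime P -> P (c ^+ k) -> P c.
Proof.
case=> _ nP1 Pm; elim: k => [|k IH]; first by rewrite expr0.
by rewrite exprS => /Pm [] // /IH.
Qed.

Theorem corollary3p16
  (R : comNzRingType) (p : nat) (charRp : p \in [pchar R]) (noethR : noetherian R)
  (H : lmodType R) (xH : H -> H) (xH_act : frob_action p xH)
  (m0 : nat) (hsl : HSL_number xH m0)
  (G : lmodType R) (xG : G -> G) (xG_act : frob_action p xG)
  (pi : H -> G)
  (pi_add : forall a b, pi (a + b) = pi a + pi b)
  (pi_scale : forall (r : R) a, pi (r *: a) = r *: pi a)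
  (pi_x : forall a, pi (xH a) = xG (pi a))
  (pi_surj : forall g, exists h, pi h = g)
  (pi_ker : forall h, pi h = 0 <-> Gamma_x xH h)
  (finG : finitely_many_special xG)
  (b : R -> Prop) (b_spec : special_ideal xG b) (b_ht : height_ge b 1)
  (b_min : forall b', special_ideal xG b' -> height_ge b' 1 -> forall r, b r -> b' r)
  (h : H) :
  [<-> (forall n r, (m0 <= n)%N -> frob_bracket b (p ^ m0) r -> r *: iter n xH h = 0);
       (exists c, [/\ Rcirc c, b c & forall n, (m0 <= n)%N -> c *: iter n xH h = 0]);
       (exists c, [/\ Rcirc c, b c & exists N, forall n, (N <= n)%N -> c *: iter n xH h = 0]);
       (exists c, Rcirc c /\ exists N, forall n, (N <= n)%N -> c *: iter n xH h = 0)].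
Proof.
have pp : (0 < p)%N by apply: prime_gt0; apply: pcharf_prime charRp.
have ppn : forall n, (0 < p ^ n)%N by move=> n; rewrite expn_gt0 pp.
have pi0 : pi 0 = 0.
  have E := pi_add 0 0; rewrite addr0 in E.
  by apply: (addrI (pi 0)); rewrite addr0 -E.
have Gtf : forall y, xG y = 0 -> y = 0.
  move=> y Hy; case: (pi_surj y) => h' E; subst y; apply/(pi_ker h').
  have : Gamma_x xH (xH h') by apply/(pi_ker (xH h')); rewrite pi_x.
  by case=> j Hj; exists j.+1; rewrite iterSr.
have Gtfn : forall k y, iter k xG y = 0 -> y = 0.
  by elim=> [//|k IH] y /= /Gtf /IH.
have piI : forall n a, pi (iter n xH a) = iter n xG (pi a).
  by elim=> [//|n IH] a /=; rewrite pi_x IH.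
have key : (exists c, Rcirc c /\ exists N, forall n, (N <= n)%N -> c *: iter n xH h = 0) ->
    forall n r, b r -> r ^+ (p ^ m0) *: iter (m0 + n) xH h = 0.
  case=> c [Rc [N HN]].
  pose g := pi h.
  have hg : forall n, c *: iter n xG g = 0.
    move=> n; apply: (Gtfn N); rewrite (iterZx xG_act) -iterD.
    apply: powS => //.
    by rewrite /g -piI -pi_scale HN ?leq_addr.
  pose Nset := fun y => forall n, c *: iter n xG y = 0.
  have Nx : forall n y, Nset y -> Nset (iter n xG y).
    by move=> n y Hy m; rewrite -iterD.
  pose b' := fun r => forall y, Nset y -> r *: y = 0.
  have spec : special_ideal xG b'.
    split.
      split.
      - by move=> y _; rewrite scale0r.
      - by move=> r1 r2 H1 H2 y Hy; rewrite scalerDl H1 ?H2 ?addr0.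
      - by move=> r1 r2 H2 y Hy; rewrite -scalerA H2 ?scaler0.
    exists Nset; split.
      split.
      - by move=> n; rewrite (iter0 xG_act) scaler0.
      - by move=> a1 a2 H1 H2 n; rewrite (iterDx xG_act) scalerDr H1 H2 addr0.
      - by move=> r a Ha n; rewrite (iterZx xG_act) scalerA mulrC -scalerA Ha scaler0.
      - by move=> a Ha n; rewrite -iterSr; apply: Ha.
    move=> n r; split.
      move=> Hg y Hy; apply: (Gtfn n); rewrite (iterZx xG_act).
      by apply: powS => //; apply: Hg.
    by move=> Hb' y Hy; apply: Hb'; apply: Nx.
  have hb' : height_ge b' 1.
    move=> P Pp Psub.
    have Pc : P c by apply: Psub => y Hy; exact: (Hy 0%N).
    have [Q [Qp sQ]] : exists Q, is_prime Q /\ sincl Q P.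
      apply: NNPP => nex; apply: (Rc P) => //; split=> // Q Qp sQ.
      by apply: nex; exists Q.
    exists (fun i => if i == 0%N then Q else P); split.
    - by case=> [|i] _.
    - by case=> [|i].
    - by [].
  move=> n r br.
  have Hr : r *: iter n xG g = 0 by apply: (b_min b' spec hb' r br); apply: Nx.
  have : Gamma_x xH (r *: iter n xH h) by apply/(pi_ker (r *: iter n xH h)); rewrite pi_scale piI.
  by move/(proj1 hsl); rewrite (iterZx xH_act) -iterD.
tfae.
- move=> Hi.
  case: (Rcirc_exists R b noethR (proj1 b_spec) b_ht) => c [Rc bc].
  exists (c ^+ (p ^ m0)); split.
  + by move=> P Pm /(prime_exp R P c _ (proj1 Pm)); apply: Rc.
  + case: (proj1 b_spec) => _ _ bM.
    by rewrite -(prednK (ppn m0)) exprSr; apply: bM.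
  + move=> n Hn; apply: Hi => //.
    exists 1%N, (fun _ => 1), (fun _ => c); split=> //.
    by rewrite big_ord1 mul1r.
- by case=> c [Rc bc Hc]; exists c; split=> //; exists m0.
- by case=> c [Rc bc Hc]; exists c.
- move=> Hiv n r Hn [k [a [s [bs ->]]]].
  rewrite scaler_suml big1 // => i _.
  rewrite -scalerA -(subnKC Hn) key // scaler0 //.
Qed.
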